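(* Consider a triadic majority rule round among participants $x,y,z$ (nodes of a median graph), started from any state of the round (any current winner and any proposer). Suppose $y$ and $z$ follow truthful bargaining while $x$ follows an arbitrary (possibly history-dependent) strategy. Then either the round never ends, or $m(x,y,z)$ lies on a shortest path between $x$ and the winner $\hat w$ of the round.
   Context: $G$ is a finite connected unweighted undirected median graph: with shortest-path distance $d$ and $I_{ab}=\{v:d(a,v)+d(v,b)=d(a,b)\}$, $\lvert I_{ab}\cap I_{ac}\cap I_{bc}\rvert=1$ for all $a,b,c$, and $m(a,b,c)$ is that node. Triadic majority rule round: there is a current winner and a proposer. In each step the proposer proposes a node or a motion to end; all three vote simultaneously to accept or reject. An accepted alternative becomes the current winner. If the vote is unanimous the proposer stays; otherwise the participant in the minority becomes proposer. If a motion to end is accepted by majority, the round ends with winner the current winner. Truthful bargaining for $u$ with current winner $w$: $P_u=I_{uw}\setminus\{w\}$, $B_u=(P_u\cap P_{u'})\cup(P_u\cap P_{u''})$ ($u',u''$ the other members); $u$ proposes a point of $B_u$ closest to $u$ if $B_u\neq\emptyset$ and a motion to end otherwise; accepts an alternative $a$ iff $d(u,a)<d(u,w)$; accepts a motion to end iff $B_u=\emptyset$; ties broken arbitrarily. *)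

(* Defs.v *)
From mathcomp Require Import all_boot.
Set Implicit Arguments. Unset Strict Implicit. Unset Printing Implicit Defensive.

Section Graph.
Variables (T : finType) (e : rel T).

Fixpoint reachn (n : nat) (x y : T) : bool :=
  match n with
  | 0 => x == y
  | n'.+1 => [exists z, e x z && reachn n' z y]
  end.

(* shortest-path distance (correct for connected graphs, where every
   distance is < #|T|) *)
Definition dist (x y : T) : nat := find (fun n => reachn n x y) (iota 0 #|T|).

Definition interval (a b : T) : {set T} :=
  [set v | dist a v + dist v b == dist a b].

Definition simple_graph : Prop := symmetric e /\ irreflexive e.
Definition connected_graph : Prop := forall x y : T, connect e x y.
Definition median_graph : Prop :=
  simple_graph /\ connected_graph /\
  forall a b c : T, #|interval a b :&: interval a c :&: interval b c| = 1.

Definition median (a b c : T) : T :=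
  odflt a [pick v in interval a b :&: interval a c :&: interval b c].

Variable pos : 'I_3 -> T.

(* a proposal: Some a = propose node a, None = motion to end *)
Definition proposal := option T.
(* a state: (current winner, current proposer) *)
Definition state := (T * 'I_3)%type.
(* a step: proposal, and the votes (true = accept) of all three players *)
Definition move := (proposal * ('I_3 -> bool))%type.

Definition accepted (v : 'I_3 -> bool) : bool := 2 <= #|[set i | v i]|.
Definition unanimous (v : 'I_3 -> bool) : bool := [forall i, forall j, v i == v j].

Definition next_state (s : state) (m : move) : state :=
  let w' := if m.1 is Some a then (if accepted m.2 then a else s.1) else s.1 in
  let p' := if unanimous m.2 then s.2
            else odflt s.2 [pick i | m.2 i != accepted m.2] in
  (w', p').

Definition end_accepted (m : move) : bool := (m.1 == None) && accepted m.2.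

Definition Pset (u : 'I_3) (w : T) : {set T} := interval (pos u) w :\ w.
Definition Bset (u : 'I_3) (w : T) : {set T} :=
  [set a in Pset u w | [exists v, (v != u) && (a \in Pset v w)]].

Definition truthful_proposal (u : 'I_3) (w : T) (pr : proposal) : Prop :=
  if Bset u w == set0 then pr = None
  else exists2 b, pr = Some b &
       b \in Bset u w /\ forall c, c \in Bset u w -> dist (pos u) b <= dist (pos u) c.

Definition truthful_vote (u : 'I_3) (w : T) (pr : proposal) : bool :=
  if pr is Some a then dist (pos u) a < dist (pos u) w else Bset u w == set0.

Definition truthful_at (u : 'I_3) (s : state) (m : move) : Prop :=
  (s.2 = u -> truthful_proposal u s.1 m.1) /\ m.2 u = truthful_vote u s.1 m.1.

(* players 1 (y) and 2 (z) are truthful; player 0 (x) is unconstrained *)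
Definition conforming (s : state) (m : move) : Prop :=
  forall u : 'I_3, u != ord0 -> truthful_at u s m.

(* ends_with s ms wf : the sequence of moves ms, played from state s,
   is a (finite) play of the round in which y and z bargain truthfully,
   the round ends at its last move, and the winner is wf *)
Fixpoint ends_with (s : state) (ms : seq move) (wf : T) : Prop :=
  match ms with
  | [::] => False
  | m :: ms' =>
      conforming s m /\
      (if end_accepted m then ms' = [::] /\ wf = s.1
       else ends_with (next_state s m) ms' wf)
  end.

End Graph.

(* Main.v *)
Require Import Defs.
From mathcomp Require Import all_boot.
From mathcomp Require Import zify.

Section Dist.
Variables (T : finType) (e : rel T).
Hypothesis sym : symmetric e.
Hypothesis conn : connected_graph e.

Lemma reach_add n m x y z :
  reachn e n x y -> reachn e m y z -> reachn e (n + m) x z.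
Proof.
elim: n x => [|n IH] x /=; first by move/eqP->.
case/existsP=> x' /andP[ex rx] ry; apply/existsP; exists x'.
by rewrite ex (IH _ rx ry).
Qed.

Lemma reach_last n x y z : reachn e n x y -> e y z -> reachn e n.+1 x z.
Proof.
move=> r eyz; have r1 : reachn e 1 y z.
  by apply/existsP; exists z; rewrite /= eyz eqxx.
by have := @reach_add n 1 x y z r r1; rewrite addn1.
Qed.

Lemma reach_sym n x y : reachn e n x y -> reachn e n y x.
Proof.
elim: n x y => [|n IH] x y /=; first by rewrite eq_sym.
case/existsP=> x' /andP[ex rx]; apply: reach_last (IH _ _ rx) _.
by rewrite sym.
Qed.

Lemma reach_path x p : path e x p -> reachn e (size p) x (last x p).
Proof.
elim: p x => [|a p IH] x /=; first by rewrite eqxx.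
case/andP=> ex pp; apply/existsP; exists a; by rewrite ex IH.
Qed.

Lemma reach_ex x y : exists2 n, n < #|T| & reachn e n x y.
Proof.
have /connectP[p pp ->] := conn x y.
case: (shortenP pp) => p' pp' up' _.
exists (size p'); last exact: reach_path.
have := max_card (mem (x :: p')).
by move/card_uniqP: up' => -> /=.
Qed.

Lemma dist_has x y : has (fun n => reachn e n x y) (iota 0 #|T|).
Proof.
case: (reach_ex x y) => n lt r; apply/hasP; exists n => //.
by rewrite mem_iota.
Qed.

Lemma dist_lt x y : dist e x y < #|T|.
Proof. by have := dist_has x y; rewrite has_find size_iota. Qed.

Lemma dist_reach x y : reachn e (dist e x y) x y.
Proof.
have := nth_find 0 (dist_has x y); have := dist_lt x y; rewrite /dist => h.
by rewrite nth_iota // add0n.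
Qed.

Lemma dist_min n x y : reachn e n x y -> n < #|T| -> dist e x y <= n.
Proof.
move=> r lt; rewrite leqNgt; apply/negP => h.
have := before_find 0 h; rewrite nth_iota // add0n r //.
Qed.

Lemma dist_sym x y : dist e x y = dist e y x.
Proof.
apply/eqP; rewrite eqn_leq; apply/andP; split; apply: dist_min;
  by [apply: reach_sym; apply: dist_reach | apply: dist_lt].
Qed.

Lemma dist0 x : dist e x x = 0.
Proof.
apply/eqP; rewrite -leqn0; apply: dist_min; first by rewrite /= eqxx.
have := dist_lt x x; lia.
Qed.

Lemma dist_tri x y z : dist e x z <= dist e x y + dist e y z.
Proof.
case: (ltnP (dist e x y + dist e y z) #|T|) => h.
  by apply: dist_min h; apply: reach_add (dist_reach _ _) (dist_reach _ _).
by have := dist_lt x z; lia.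
Qed.

End Dist.

Section Med.
Variables (T : finType) (e : rel T).
Hypothesis mg : median_graph e.

Let sym : symmetric e. Proof. by case: mg => [[]]. Qed.
Let conn : connected_graph e. Proof. by case: mg => _ []. Qed.

Definition trip a b c := interval e a b :&: interval e a c :&: interval e b c.

Lemma median_in a b c : median e a b c \in trip a b c.
Proof.
rewrite /median /trip; case: pickP => [v Hv | H] //=.
case: mg => _ [_ /(_ a b c) /eqP/cards1P [x Hx]].
by have := H x; rewrite Hx set11.
Qed.

Lemma median_uniq a b c v : v \in trip a b c -> median e a b c = v.
Proof.
have := median_in a b c; rewrite /trip.
case: mg => _ [_ /(_ a b c) /eqP/cards1P [x ->]].
by rewrite !inE => /eqP -> /eqP ->.
Qed.

Lemma inI a b v : (v \in interval e a b) = (dist e a v + dist e v b == dist e a b).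
Proof. by rewrite inE. Qed.

Lemma tri x y z : dist e x z <= dist e x y + dist e y z.
Proof. exact: dist_tri. Qed.

Lemma dsym x y : dist e x y = dist e y x.
Proof. exact: dist_sym. Qed.

Lemma key a b c w :
  (forall v, v \in interval e b w -> v \in interval e a w -> v = w) ->
  (forall v, v \in interval e b w -> v \in interval e c w -> v = w) ->
  median e a b c \in interval e a w.
Proof.
move=> H1 H2.
have wab : w \in interval e a b.
  have := median_in a b w; rewrite /trip !in_setI -!andbA => /and3P[h1 h2 h3].
  by have := H1 _ (h3 : _ \in interval e b w) (h2 : _ \in interval e a w) => <-.
have wbc : w \in interval e b c.
  have := median_in b c w; rewrite /trip !in_setI -!andbA => /and3P[h1 h2 h3].
  by have := H2 _ (h2 : _ \in interval e b w) (h3 : _ \in interval e c w) => <-.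
have := median_in a c w; rewrite /trip !in_setI -!andbA !inI => /and3P[h1 h2 h3].
set u := median e a c w in h1 h2 h3 *.
rewrite !inI in wab wbc.
move/eqP: h1 => h1; move/eqP: h2 => h2; move/eqP: h3 => h3; move/eqP: wab => wab; move/eqP: wbc => wbc.
suff -> : median e a b c = u.
  by rewrite h2.
apply: median_uniq; rewrite /trip !inE h1 eqxx andbT /=.
have t1 := tri a u b; have t2 := tri u w b; have t3 := tri b u c; have t4 := tri b w u.
have s1 := dsym c u; have s2 := dsym u w; have s3 := dsym c w.
apply/andP; split; apply/eqP; clearbody u; lia.
Qed.

Lemma median_swap a b c : median e a c b = median e a b c.
Proof.
apply: median_uniq; have := median_in a b c; rewrite /trip !in_setI !inI -!andbA.
set u := median e a b c; clearbody u.
case/and3P => /eqP h1 /eqP h2 /eqP h3.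
have s1 := dsym c u; have s2 := dsym u b; have s3 := dsym c b.
apply/and3P; split; apply/eqP; lia.
Qed.

End Med.

Lemma Bset0 (T : finType) (e : rel T) (pos : 'I_3 -> T) u u' w v :
  Bset e pos u w == set0 -> u' != u ->
  v \in interval e (pos u) w -> v \in interval e (pos u') w -> v = w.
Proof.
move/eqP=> B0 neq h1 h2; apply/eqP; apply/negPn/negP => nv.
have : v \in Bset e pos u w.
  rewrite inE /Pset in_setD1 nv h1 /=; apply/existsP; exists u'.
  by rewrite neq in_setD1 nv h2.
by rewrite B0 inE.
Qed.

Lemma ne01 : (ord0 : 'I_3) != inord 1. Proof. by apply/eqP => /(congr1 val); rewrite /= ?inordK. Qed.
Lemma ne02 : (ord0 : 'I_3) != inord 2. Proof. by apply/eqP => /(congr1 val); rewrite /= ?inordK. Qed.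
Lemma ne12 : (inord 1 : 'I_3) != inord 2. Proof. by apply/eqP => /(congr1 val); rewrite /= ?inordK. Qed.

Lemma ne10 : (inord 1 : 'I_3) != ord0. Proof. by rewrite eq_sym ne01. Qed.
Lemma ne20 : (inord 2 : 'I_3) != ord0. Proof. by rewrite eq_sym ne02. Qed.
Lemma ne21 : (inord 2 : 'I_3) != inord 1. Proof. by rewrite eq_sym ne12. Qed.

Lemma acc12 (v : 'I_3 -> bool) : accepted v -> v (inord 1) || v (inord 2).
Proof.
rewrite /accepted => h; apply/negPn/negP; rewrite negb_or => /andP[n1 n2].
suff : #|[set i | v i]| <= 1 by move: h; lia.
apply: (@leq_trans #|[set (ord0 : 'I_3)]|); last by rewrite cards1.
apply: subset_leq_card; apply/subsetP => i.
have : i = ord0 \/ i = inord 1 \/ i = inord 2.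
  case: i => [[|[|[|k]]] Hk] //.
  - by left; apply: val_inj.
  - by right; left; apply: val_inj; rewrite /= inordK.
  - by right; right; apply: val_inj; rewrite /= inordK.
rewrite !inE => [[->|[->|->]]] //; by rewrite ?(negbTE n1) ?(negbTE n2).
Qed.

Theorem lemmaI8 (T : finType) (e : rel T) (pos : 'I_3 -> T)
    (s0 : state T) (ms : seq (move T)) (wf : T) :
  median_graph e ->
  ends_with e pos s0 ms wf ->
  median e (pos ord0) (pos (inord 1)) (pos (inord 2))
    \in interval e (pos ord0) wf.
Proof.
move=> mg; elim: ms s0 => [|m ms IH] s0 //=.
case=> conf; case: ifP => [/andP[/eqP m1 acc] [_ ->] | _ /IH //].
have v1 : m.2 (inord 1) = (Bset e pos (inord 1) s0.1 == set0).
  by have [_ ->] := conf (inord 1) ne10; rewrite m1.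
have v2 : m.2 (inord 2) = (Bset e pos (inord 2) s0.1 == set0).
  by have [_ ->] := conf (inord 2) ne20; rewrite m1.
have := @acc12 _ acc; rewrite v1 v2 => /orP[B | B].
  apply: key => // v h1 h2.
  - exact: (@Bset0 _ _ _ _ _ _ _ B ne01 h1 h2).
  - exact: (@Bset0 _ _ _ _ _ _ _ B ne21 h1 h2).
rewrite -median_swap //; apply: key => // v h1 h2.
- exact: (@Bset0 _ _ _ _ _ _ _ B ne02 h1 h2).
- exact: (@Bset0 _ _ _ _ _ _ _ B ne12 h1 h2).
Qed.
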